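(* Let $\mathcal G$ be a finite connected groupoid and $\alpha=(S_g,\alpha_g)_{g\in\mathcal G}$ a unital group-type partial action of $\mathcal G$ on a ring $S=\bigoplus_{y\in\mathcal G_0}S_y$, with $S_g=S1_g$ and $1_g\neq0$ for all $g$. Let $\mathcal H\in\mathrm{wSub}_\alpha(\mathcal G)$, with connected components $\mathcal H_1,\dots,\mathcal H_r$ having object sets $Y_1,\dots,Y_r$, choose $y_j\in Y_j$, and let $T=S^{\alpha_{\mathcal H}}$ and $T_{y_j}=S_{y_j}^{\alpha_{\mathcal H_j(y_j)}}$. Then: (i) $\mathcal G_T$ is a wide subgroupoid of $\mathcal G$ if and only if $\mathcal G(y_j)_{T_{y_j}}$ is a subgroup of $\mathcal G(y_j)$ for all $1\le j\le r$; (ii) $\mathcal G_T=\mathcal H$ if and only if $\mathcal G(y_j)_{T_{y_j}}=\mathcal H_j(y_j)$ for all $1\le j\le r$.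
   Context: A groupoid is a small category with all morphisms invertible; $\mathcal G_0$ is its object set (identified with identity morphisms), $s(g),t(g)$ source and target, $\mathcal G(x,y)=\{g:s(g)=x,t(g)=y\}$, $\mathcal G(x)=\mathcal G(x,x)$; $gh$ defined iff $s(g)=t(h)$; connected means all $\mathcal G(x,y)\ne\emptyset$; connected components are full subgroupoids on classes of $x\sim y\iff\mathcal G(x,y)\neq\emptyset$; a subgroupoid is wide if it contains all of $\mathcal G_0$. A partial action $\alpha=(S_g,\alpha_g)_{g\in\mathcal G}$ on a ring $S$: for each $g$, $S_{t(g)}$ is an ideal of $S$, $S_g$ an ideal of $S_{t(g)}$, $\alpha_g:S_{g^{-1}}\to S_g$ a ring isomorphism; $\alpha_x=\mathrm{id}_{S_x}$; for composable $(g,h)$, $\alpha_h^{-1}(S_{g^{-1}}\cap S_h)\subseteq S_{(gh)^{-1}}$ and $\alpha_g\alpha_h(a)=\alpha_{gh}(a)$ there. Unital: $S_g=S1_g$, $1_g$ central idempotent. A transversal for $x$ in a connected groupoid $\mathcal K$ is $\{\tau_y\}_{y\in\mathcal K_0}$ with $\tau_y\in\mathcal K(x,y)$, $\tau_x=x$; a partial action of connected $\mathcal K$ on $A=\bigoplus_{y\in\mathcal K_0}A_y$ is group-type if some $x$ and transversal satisfy $A_{\tau_y^{-1}}=A_x$, $A_{\tau_y}=A_y$ for all $y$; for non-connected $\mathcal K$ it is group-type if each restriction to a connected component $\mathcal K_Y$ (acting on $\bigoplus_{y\in Y}A_y$) is group-type. For a subgroupoid $\mathcal H$, $\alpha_{\mathcal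 H}=(S_h,\alpha_h)_{h\in\mathcal H}$ acts on $\bigoplus_{z\in\mathcal H_0}S_z$. $\mathrm{wSub}_\alpha(\mathcal G)$ is the set of wide subgroupoids $\mathcal H$ with $\alpha_{\mathcal H}$ group-type. For a subgroupoid $\mathcal K$ and subring $A\subseteq S$, $A^{\alpha_{\mathcal K}}=\{a\in A:\alpha_k(a1_{k^{-1}})=a1_k\ \forall k\in\mathcal K\}$. For a subring $T\subseteq S$, $\mathcal G_T=\{g\in\mathcal G:\alpha_g(t1_{g^{-1}})=t1_g\ \forall t\in T\}$; for $y\in\mathcal G_0$ and a subring $B\subseteq S_y$, $\mathcal G(y)_B=\{l\in\mathcal G(y):\alpha_l(b1_{l^{-1}})=b1_l\ \forall b\in B\}$. *)

(* Defs.v *)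
From mathcomp Require Import all_boot all_algebra.
Set Implicit Arguments. Unset Strict Implicit. Unset Printing Implicit Defensive.
Import GRing.Theory.
Local Open Scope ring_scope.

(* A finite groupoid: objects Ob, morphisms Mor; objects are identified with
   identity morphisms via idm.  comp g h = gh is meaningful iff src g = tgt h. *)
Record groupoid := Groupoid {
  Ob : finType;
  Mor : finType;
  src : Mor -> Ob;
  tgt : Mor -> Ob;
  idm : Ob -> Mor;
  comp : Mor -> Mor -> Mor;
  ginv : Mor -> Mor;
  src_idm : forall x, src (idm x) = x;
  tgt_idm : forall x, tgt (idm x) = x;
  src_comp : forall g h, src g = tgt h -> src (comp g h) = src h;
  tgt_comp : forall g h, src g = tgt h -> tgt (comp g h) = tgt g;
  compA : forall g h k, src g = tgt h -> src h = tgt k ->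
            comp g (comp h k) = comp (comp g h) k;
  comp_idl : forall g, comp (idm (tgt g)) g = g;
  comp_idr : forall g, comp g (idm (src g)) = g;
  src_ginv : forall g, src (ginv g) = tgt g;
  tgt_ginv : forall g, tgt (ginv g) = src g;
  comp_ginvr : forall g, comp g (ginv g) = idm (tgt g);
  comp_ginvl : forall g, comp (ginv g) g = idm (src g)
}.

Section Defs.
Variable G : groupoid.

Definition connected : Prop :=
  forall x y : Ob G, exists g : Mor G, src g = x /\ tgt g = y.

Definition subgroupoid (P : Mor G -> Prop) : Prop :=
  (exists g, P g) /\
  (forall g h, P g -> P h -> src g = tgt h -> P (comp g h)) /\
  (forall g, P g -> P (ginv g)).

Definition wide_subgroupoid (P : Mor G -> Prop) : Prop :=
  subgroupoid P /\ forall x : Ob G, P (idm x).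

Definition isotropy_subgroup (y : Ob G) (P : Mor G -> Prop) : Prop :=
  (forall l, P l -> src l = y /\ tgt l = y) /\
  P (idm y) /\
  (forall l m, P l -> P m -> P (comp l m)) /\
  (forall l, P l -> P (ginv l)).

Definition hrel (H : Mor G -> Prop) (x y : Ob G) : Prop :=
  exists h, H h /\ src h = x /\ tgt h = y.

Definition component (H : Mor G -> Prop) (y : Ob G) (h : Mor G) : Prop :=
  H h /\ hrel H y (src h) /\ hrel H y (tgt h).

Definition isotropy (K : Mor G -> Prop) (y : Ob G) (h : Mor G) : Prop :=
  K h /\ src h = y /\ tgt h = y.

Variable R : pzRingType.
Variable one : Mor G -> R.
Variable act : Mor G -> R -> R.     (* g |-> alpha_g (total function; only its
                                       restriction to S_{g^-1} matters) *)

Definition inS (g : Mor G) (a : R) : Prop := exists b, a = b * one g.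

Definition ideal_eq (g h : Mor G) : Prop := forall a, inS g a <-> inS h a.

Definition direct_sum_decomp : Prop :=
  (forall s : R, exists f : Ob G -> R,
       (forall y, inS (idm y) (f y)) /\ s = \sum_(y : Ob G) f y) /\
  (forall f : Ob G -> R, (forall y, inS (idm y) (f y)) ->
       \sum_(y : Ob G) f y = 0 -> forall y, f y = 0).

Definition unital_partial_action : Prop :=
  (forall g, one g * one g = one g) /\
  (forall g a, a * one g = one g * a) /\
  (* S_g is an ideal of S_{t(g)} (S_{t(g)} = S 1_{t(g)} is an ideal of S) *)
  (forall g a, inS g a -> inS (idm (tgt g)) a) /\
  (forall g a, inS (ginv g) a -> inS g (act g a)) /\
  (forall g a b, inS (ginv g) a -> inS (ginv g) b ->
       act g (a + b) = act g a + act g b) /\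
  (forall g a b, inS (ginv g) a -> inS (ginv g) b ->
       act g (a * b) = act g a * act g b) /\
  (forall g a b, inS (ginv g) a -> inS (ginv g) b ->
       act g a = act g b -> a = b) /\
  (forall g c, inS g c -> exists a, inS (ginv g) a /\ act g a = c) /\
  (forall x a, inS (idm x) a -> act (idm x) a = a) /\
  (forall g h a, src g = tgt h -> inS (ginv h) a -> inS (ginv g) (act h a) ->
       inS (ginv (comp g h)) a /\ act g (act h a) = act (comp g h) a).

Definition group_type_on (K : Mor G -> Prop) (Y : Ob G -> Prop) : Prop :=
  exists x, Y x /\ exists tau : Ob G -> Mor G,
    tau x = idm x /\
    forall y, Y y ->
      K (tau y) /\ src (tau y) = x /\ tgt (tau y) = y /\
      ideal_eq (ginv (tau y)) (idm x) /\ ideal_eq (tau y) (idm y).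

Definition group_type_sub (H : Mor G -> Prop) : Prop :=
  forall y, group_type_on (component H y) (hrel H y).

Definition wSub (H : Mor G -> Prop) : Prop :=
  wide_subgroupoid H /\ group_type_sub H.

Definition fixed_ring (K : Mor G -> Prop) (A : R -> Prop) (a : R) : Prop :=
  A a /\ forall k, K k -> act k (a * one (ginv k)) = a * one k.

Definition G_fix (T : R -> Prop) (g : Mor G) : Prop :=
  forall t, T t -> act g (t * one (ginv g)) = t * one g.

Definition Gy_fix (y : Ob G) (B : R -> Prop) (l : Mor G) : Prop :=
  src l = y /\ tgt l = y /\
  forall b, B b -> act l (b * one (ginv l)) = b * one l.

End Defs.

(* Main.v *)
Require Import Defs.
From mathcomp Require Import all_boot all_algebra.
From Stdlib Require Import ClassicalEpsilon Classical.
Import Defs.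
Set Implicit Arguments. Unset Strict Implicit. Unset Printing Implicit Defensive.
Import GRing.Theory.
Local Open Scope ring_scope.

Section Gpd.
Variable G : groupoid.
Implicit Types (f g h k : Mor G) (x : Ob G).

Lemma ginv_ginv g : ginv (ginv g) = g.
Proof.
have e1 : comp (ginv (ginv g)) (ginv g) = idm (tgt g) by rewrite comp_ginvl src_ginv.
rewrite -[in RHS](comp_idl g) -e1 -compA ?src_ginv ?tgt_ginv //.
rewrite comp_ginvl.
have -> : src g = src (ginv (ginv g)) by rewrite src_ginv tgt_ginv.
by rewrite comp_idr.
Qed.

Lemma ginv_idm x : ginv (idm x) = idm x.
Proof.
have e1 := comp_idr (ginv (idm x)); rewrite src_ginv tgt_idm in e1.
by rewrite -e1 comp_ginvl src_idm.
Qed.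

Lemma cancel_l f g : src f = tgt g -> comp (ginv f) (comp f g) = g.
Proof.
move=> e; rewrite compA ?src_ginv ?tgt_ginv // comp_ginvl e comp_idl //.
Qed.

Lemma cancel_l' f g : tgt f = tgt g -> comp f (comp (ginv f) g) = g.
Proof.
move=> e; have := @cancel_l (ginv f) g; rewrite ginv_ginv; apply.
by rewrite src_ginv.
Qed.

Lemma cancel_r f g : src g = tgt f -> comp (comp g f) (ginv f) = g.
Proof.
move=> e; rewrite -compA ?tgt_ginv // comp_ginvr -e comp_idr //.
Qed.

Lemma cancel_r' f g : src g = src f -> comp (comp g (ginv f)) f = g.
Proof.
move=> e; have := @cancel_r (ginv f) g; rewrite ginv_ginv; apply.
by rewrite tgt_ginv.
Qed.

Lemma ginv_comp g h : src g = tgt h ->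
  ginv (comp g h) = comp (ginv h) (ginv g).
Proof.
move=> e.
have L : comp (comp (ginv (comp g h)) g) h = idm (src h).
  rewrite -compA ?src_ginv ?tgt_comp // comp_ginvl src_comp //.
have E : ginv (comp g h) = comp (comp (ginv (comp g h)) g) (ginv g).
  by rewrite cancel_r // src_ginv tgt_comp.
rewrite E; congr (comp _ (ginv g)).
rewrite -(@cancel_r h (comp (ginv (comp g h)) g)); last first.
  by rewrite src_comp ?src_ginv ?tgt_comp.
by rewrite L -(tgt_ginv h) comp_idl.
Qed.

Lemma conj_eq f1 g f2 : src g = tgt f2 -> tgt f1 = tgt g ->
  g = comp f1 (comp (comp (ginv f1) (comp g f2)) (ginv f2)).
Proof.
move=> e1 e0.
have e2 : src (ginv f1) = tgt (comp g f2) by rewrite (src_ginv f1) (tgt_comp e1).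
have e3 : src (comp g f2) = tgt (ginv f2) by rewrite (src_comp e1) (tgt_ginv f2).
by rewrite -(compA e2 e3) (cancel_r e1) cancel_l'.
Qed.

Lemma comp_eq fw fv fu g h : tgt fw = tgt g -> src g = tgt fv -> tgt h = tgt fv ->
  src h = tgt fu ->
  comp (comp (ginv fw) (comp g fv)) (comp (ginv fv) (comp h fu)) =
  comp (ginv fw) (comp (comp g h) fu).
Proof.
move=> a1 a2 a3 a4.
have b1 : src (ginv fv) = tgt (comp h fu) by rewrite (src_ginv fv) (tgt_comp a4).
have b2 : src fv = tgt (comp (ginv fv) (comp h fu)) by rewrite (tgt_comp b1) (tgt_ginv fv).
have b3 : src (ginv fw) = tgt (comp g fv) by rewrite (src_ginv fw) (tgt_comp a2).
have b4 : src (comp g fv) = tgt (comp (ginv fv) (comp h fu)) by rewrite (src_comp a2).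
rewrite -(compA b3 b4) -(compA a2 b2) cancel_l'; last by rewrite (tgt_comp a4).
have a5 : src g = tgt h by rewrite a2 a3.
by rewrite (compA a5 a4).
Qed.

End Gpd.

Section Main.
Variables (G : groupoid) (R : pzRingType) (one : Mor G -> R) (act : Mor G -> R -> R).
Hypothesis upa : unital_partial_action one act.
Implicit Types (f g h k : Mor G) (x y z w : Ob G) (a b c : R).

Ltac dupa := let I1 := fresh "I" in have [I1 [I2 [I3 [I4 [I5 [I6 [I7 [I8 [I9 I10]]]]]]]]] := upa.
Notation e y := (one (idm y)).
Definition Fix g a := act g (a * one (ginv g)) = a * one g.
Definition full f := one f = e (tgt f) /\ one (ginv f) = e (src f).

Lemma idem g : one g * one g = one g. Proof. by dupa; auto. Qed.
Lemma cent g a : a * one g = one g * a. Proof. by dupa; auto. Qed.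
Lemma subt g a : inS one g a -> inS one (idm (tgt g)) a.
Proof. by dupa; auto. Qed.
Lemma actS g a : inS one (ginv g) a -> inS one g (act g a).
Proof. by dupa; auto. Qed.
Lemma actD g a b : inS one (ginv g) a -> inS one (ginv g) b ->
  act g (a + b) = act g a + act g b.
Proof. by dupa; auto. Qed.
Lemma actM g a b : inS one (ginv g) a -> inS one (ginv g) b ->
  act g (a * b) = act g a * act g b.
Proof. by dupa; auto. Qed.
Lemma actSurj g c : inS one g c -> exists a, inS one (ginv g) a /\ act g a = c.
Proof. by dupa; auto. Qed.
Lemma actId x a : inS one (idm x) a -> act (idm x) a = a.
Proof. by dupa; auto. Qed.
Lemma actC g h a : src g = tgt h -> inS one (ginv h) a -> inS one (ginv g) (act h a) ->
       inS one (ginv (comp g h)) a /\ act g (act h a) = act (comp g h) a.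
Proof. by dupa; auto. Qed.

Lemma inSE g a : inS one g a <-> a * one g = a.
Proof.
split; last by move=> <-; exists a.
by case=> b ->; rewrite -mulrA idem.
Qed.

Lemma inS_mulr g a : inS one g (a * one g). Proof. by exists a. Qed.
Lemma inS_self g : inS one g (one g). Proof. by exists 1; rewrite mul1r. Qed.
Lemma inS0 g : inS one g 0. Proof. by exists 0; rewrite mul0r. Qed.

Lemma inS_one g h a : one g = one h -> inS one g a <-> inS one h a.
Proof. by move=> E; rewrite /inS E. Qed.

Lemma one_sub g : one g * e (tgt g) = one g.
Proof. by apply/inSE; apply: subt; exists 1; rewrite mul1r. Qed.

Lemma one_sub' g : e (tgt g) * one g = one g.
Proof. by rewrite -cent one_sub. Qed.

Lemma one_eq g h : inS one g (one h) -> inS one h (one g) -> one g = one h.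
Proof.
move=> /inSE E1 /inSE E2; by rewrite -E2 cent E1.
Qed.

Lemma mul_one_tgt g a : a * one g = (a * e (tgt g)) * one g.
Proof. by rewrite -mulrA one_sub'. Qed.

Lemma mul_one_src g a : a * one (ginv g) = (a * e (src g)) * one (ginv g).
Proof. by rewrite -(tgt_ginv g) mul_one_tgt. Qed.

Lemma act0 g : act g 0 = 0.
Proof.
have := @actD g 0 0 (inS0 _) (inS0 _); rewrite addr0 => E.
by apply: (@addrI _ (act g 0)); rewrite addr0 -E.
Qed.

Lemma act_one g : act g (one (ginv g)) = one g.
Proof.
have [a [Ha Ea]] := actSurj (inS_mulr g 1); rewrite mul1r in Ea.
have Su : inS one g (act g (one (ginv g))) by apply: actS; exists 1; rewrite mul1r.
move/inSE: Su => <-; rewrite -{1}Ea -actM //; last by exists 1; rewrite mul1r.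
by rewrite -cent; move/inSE: (Ha) => ->.
Qed.

Lemma Fix_ext g a a' : a * e (src g) = a' * e (src g) ->
  a * e (tgt g) = a' * e (tgt g) -> Fix g a <-> Fix g a'.
Proof.
by move=> E1 E2; rewrite /Fix (mul_one_src g a) E1 -mul_one_src (mul_one_tgt g a) E2 -mul_one_tgt.
Qed.

Lemma Fix_id x a : Fix (idm x) a.
Proof. by rewrite /Fix ginv_idm actId //; exists a. Qed.

Lemma Fix_inv g a : Fix g a -> Fix (ginv g) a.
Proof.
rewrite /Fix ginv_ginv => E; rewrite -E.
have S : inS one (ginv (ginv g)) (act g (a * one (ginv g))).
  by rewrite ginv_ginv; apply: actS; exact: inS_mulr.
have [_ ->] := actC (src_ginv g) (inS_mulr _ _) S.
rewrite comp_ginvl actId //; rewrite -(tgt_ginv g); apply: subt; exact: inS_mulr.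
Qed.

Lemma full_inv f : full f -> full (ginv f).
Proof. by case=> E1 E2; split; rewrite ?ginv_ginv ?tgt_ginv ?src_ginv. Qed.

Section LC.
Variables (f g : Mor G).
Hypothesis (ff : full f) (e_fg : src f = tgt g).

Lemma LC1 a : inS one (ginv (comp f g)) a <-> inS one (ginv g) a.
Proof.
case: ff => F1 F2; split => Ha.
  have := @actC (ginv f) (comp f g) a; rewrite cancel_l //; case=> //.
    by rewrite src_ginv tgt_comp.
  rewrite ginv_ginv; apply/(inS_one _ F1); rewrite -(tgt_comp e_fg).
  by apply: subt; apply: actS.
have [] // := @actC f g a e_fg Ha.
apply/(inS_one _ F2); rewrite e_fg; apply: subt; exact: actS.
Qed.

Lemma LC2 a : inS one (ginv g) a -> act (comp f g) a = act f (act g a).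
Proof.
case: ff => F1 F2 Ha; have [] // := @actC f g a e_fg Ha.
apply/(inS_one _ F2); rewrite e_fg; apply: subt; exact: actS.
Qed.

Lemma LC3 : one (ginv (comp f g)) = one (ginv g).
Proof.
by apply: one_eq; [apply/LC1; exact: inS_self | apply/LC1; exact: inS_self].
Qed.

Lemma LC4 : one (comp f g) = act f (one g).
Proof.
by rewrite -act_one LC3 LC2 ?act_one //; exact: inS_self.
Qed.

Lemma Fix_compl a : Fix f a -> Fix g a -> Fix (comp f g) a.
Proof.
case: ff => F1 F2; rewrite /Fix => Ff Fg.
rewrite LC3 LC2; last exact: inS_mulr.
rewrite Fg mul_one_tgt -e_fg -F2 actM; first last.
- apply/(inS_one _ F2); rewrite e_fg; apply: subt; exists 1; by rewrite mul1r.
- exact: inS_mulr.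
by rewrite Ff -LC4 F1 -(tgt_comp e_fg) -mul_one_tgt.
Qed.

End LC.

Lemma Fix_compr f g a : full f -> src g = tgt f -> Fix f a -> Fix g a ->
  Fix (comp g f) a.
Proof.
move=> ff E Ff Fg.
have <- : ginv (comp (ginv f) (ginv g)) = comp g f.
  by rewrite ginv_comp ?ginv_ginv // src_ginv tgt_ginv.
apply: Fix_inv; apply: Fix_compl; rewrite ?src_ginv ?tgt_ginv //.
- exact: full_inv.
- exact: Fix_inv.
- exact: Fix_inv.
Qed.

Lemma full_comp f k : full f -> full k -> src f = tgt k -> full (comp f k).
Proof.
move=> ff fk E; split.
  rewrite (LC4 ff E) tgt_comp //; case: fk => -> _; rewrite -E.
  by case: ff => F1 F2; rewrite -F2 act_one.
by rewrite (LC3 ff E) src_comp //; case: fk.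
Qed.

Hypothesis dsd : direct_sum_decomp one.

Lemma e_orth z w : z != w -> e z * e w = 0.
Proof.
move=> nzw; case: dsd => _ U.
pose F := fun v => if v == z then e z * e w else if v == w then - (e z * e w) else 0.
have HF : forall v, inS one (idm v) (F v).
  move=> v; rewrite /F; case: (eqVneq v z) => [->|_].
    by exists (e w); rewrite cent.
  case: (eqVneq v w) => [->|_]; last exact: inS0.
  by exists (- e z); rewrite mulNr.
have S0 : \sum_v F v = 0.
  rewrite (bigD1 z) //= (bigD1 w) /=; last by rewrite eq_sym.
  rewrite big1; last by move=> v /andP [nz nw]; rewrite /F (negbTE nz) (negbTE nw).
  have wz : (w == z) = false by apply/negbTE; rewrite eq_sym.
  by rewrite /F eqxx wz eqxx addr0 subrr.
by have := U F HF S0 z; rewrite /F eqxx.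
Qed.

Lemma sum_proj (c : Ob G -> R) w : (forall v, inS one (idm v) (c v)) ->
  (\sum_v c v) * e w = c w.
Proof.
move=> Hc; rewrite mulr_suml (bigD1 w) //= big1 ?addr0.
  by apply/inSE.
move=> v nvw; move/inSE: (Hc v) => <-; rewrite -mulrA e_orth ?mulr0 //.
Qed.


Variable H : Mor G -> Prop.
Hypothesis wsH : wSub one H.
Notation Fx := Fix.
Notation T := (fixed_ring one act H (fun _ => True)).
Notation Ty := (fun y => fixed_ring one act (isotropy (component H y) y)
                                (inS one (idm y))).
Notation GT := (G_fix one act T).

Lemma H_comp g h : H g -> H h -> src g = tgt h -> H (comp g h).
Proof. by case: wsH => [[[_ [C _]] _] _]; apply: C. Qed.
Lemma H_inv g : H g -> H (ginv g).
Proof. by case: wsH => [[[_ [_ I]] _] _]; apply: I. Qed.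
Lemma H_id x : H (idm x).
Proof. by case: wsH => [[_ W] _]. Qed.

Lemma hrel_refl y : hrel H y y.
Proof. by exists (idm y); rewrite src_idm tgt_idm; split => //; exact: H_id. Qed.
Lemma hrel_sym y z : hrel H y z -> hrel H z y.
Proof.
case=> h [Hh [<- <-]]; exists (ginv h); rewrite src_ginv tgt_ginv; split => //.
exact: H_inv.
Qed.
Lemma hrel_trans y z w : hrel H y z -> hrel H z w -> hrel H y w.
Proof.
case=> h [Hh [<- E]] [k [Hk [E' <-]]].
have ee : src k = tgt h by rewrite E' E.
exists (comp k h); rewrite src_comp // tgt_comp //; split => //; exact: H_comp.
Qed.

Lemma exists_full y z : hrel H y z ->
  exists f, H f /\ full f /\ src f = y /\ tgt f = z.
Proof.
move=> hyz; case: wsH => _ /(_ y) [x [hyx [tau [_ Htau]]]].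
have fullt v : hrel H y v -> H (tau v) /\ full (tau v) /\ src (tau v) = x /\ tgt (tau v) = v.
  move=> hv; have [[Hv _] [sv [tv [I1 I2]]]] := Htau v hv.
  do !split => //.
    apply: one_eq => //; rewrite ?tv; [apply: (proj2 (I2 _)) | apply: (proj1 (I2 _))]; exact: inS_self.
  apply: one_eq => //; rewrite ?sv; [apply: (proj2 (I1 _)) | apply: (proj1 (I1 _))]; exact: inS_self.
have [Hz [fz [sz tz]]] := fullt z hyz.
have [Hy [fy [sy ty]]] := fullt y (hrel_refl y).
have E : src (tau z) = tgt (ginv (tau y)) by rewrite tgt_ginv sy.
exists (comp (tau z) (ginv (tau y))); split; last split; last split.
- by apply: H_comp => //; exact: H_inv.
- by apply: full_comp => //; exact: full_inv.
- by rewrite src_comp // src_ginv.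
- by rewrite tgt_comp.
Qed.

Lemma iso_of y l : H l -> src l = y -> tgt l = y -> isotropy (component H y) y l.
Proof.
move=> Hl sl tl; split; last by [].
by split => //; rewrite ?sl ?tl; split; exact: hrel_refl.
Qed.

Lemma extension y b : Ty y b -> exists t, T t /\ t * e y = b.
Proof.
case=> Sb Fb.
have Hex : forall z, exists f, hrel H y z ->
    H f /\ full f /\ src f = y /\ tgt f = z.
  move=> z; case: (classic (hrel H y z)) => [hz|nhz].
    by have [f Pf] := exists_full hz; exists f.
  by exists (idm y).
pose F := fun z => proj1_sig (constructive_indefinite_description _ (Hex z)).
have PF : forall z, hrel H y z -> H (F z) /\ full (F z) /\ src (F z) = y /\ tgt (F z) = z.
  by move=> z; rewrite /F; case: constructive_indefinite_description.
pose c := fun z => if excluded_middle_informative (hrel H y z) then act (F z) b else 0.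
have Sc : forall z, inS one (idm z) (c z).
  move=> z; rewrite /c; destruct (excluded_middle_informative (hrel H y z)) as [hz|nhz]; simpl; last exact: inS0.
  have [_ [[F1 F2] [sF tF]]] := PF z hz.
  rewrite tF in F1; rewrite sF in F2; apply/(inS_one _ F1); apply: actS; apply/(inS_one _ F2); done.
pose t := \sum_z c z.
have tc : forall z, t * e z = c z by move=> z; exact: sum_proj.
have cE : forall z, hrel H y z -> c z = act (F z) b.
  by move=> z hz; rewrite /c; destruct (excluded_middle_informative (hrel H y z)).
have cN : forall z, ~ hrel H y z -> c z = 0.
  by move=> z hz; rewrite /c; destruct (excluded_middle_informative (hrel H y z)).
have bE : b * e y = b by apply/inSE.
have ty : t * e y = b.
  rewrite tc cE; last exact: hrel_refl.
  have [Hy [[F1 F2] [sF tF]]] := PF y (hrel_refl y).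
  by have := Fb _ (iso_of Hy sF tF); rewrite /Fix F1 F2 sF tF bE => ->.
have FixF : forall z, hrel H y z -> Fx (F z) t.
  move=> z hz; have [Hz [[F1 F2] [sF tF]]] := PF z hz.
  by rewrite /Fix F2 F1 sF tF ty tc cE.
exists t; split => //; split => // h Hh.
case: (classic (hrel H y (src h))) => [hs|nhs].
  have ht : hrel H y (tgt h) by apply: hrel_trans hs _; exists h.
  have [Hz [fz [sz tz]]] := PF _ hs.
  have [Hw [fw [sw tw]]] := PF _ ht.
  set k := comp (ginv (F (tgt h))) (comp h (F (src h))).
  have e1 : src h = tgt (F (src h)) by rewrite tz.
  have e2 : src (ginv (F (tgt h))) = tgt (comp h (F (src h))) by rewrite src_ginv tgt_comp.
  have sk : src k = y by rewrite /k !src_comp.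
  have tk : tgt k = y by rewrite /k tgt_comp // (tgt_ginv (F (tgt h))).
  have Hk : H k by apply: H_comp => //; [exact: H_inv | exact: H_comp].
  have Fk : Fx k t.
    apply/(Fix_ext (a' := b)); rewrite ?sk ?tk ?ty ?bE //.
    exact: Fb (iso_of Hk sk tk).
  have -> : h = comp (F (tgt h)) (comp k (ginv (F (src h)))).
    have e3 : src (comp h (F (src h))) = tgt (ginv (F (src h))).
      by rewrite src_comp // (tgt_ginv (F (src h))).
    by rewrite /k -(compA e2 e3) (cancel_r e1) cancel_l'.
  have e4 : src k = tgt (ginv (F (src h))) by rewrite sk (tgt_ginv (F (src h))).
  have e5 : src (F (tgt h)) = tgt (comp k (ginv (F (src h)))) by rewrite (tgt_comp e4) tk.
  apply: (Fix_compl fw e5 (FixF _ ht)).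
  exact: (Fix_compr (full_inv fz) e4 (Fix_inv (FixF _ hs)) Fk).
have nht : ~ hrel H y (tgt h).
  move=> ht; apply: nhs; apply: hrel_trans ht _; apply: hrel_sym; by exists h.
apply/(Fix_ext (a' := 0)); rewrite ?mul0r ?tc ?cN //.
by rewrite /Fix !mul0r act0.
Qed.

Lemma GT_to_Gy y l : GT l -> src l = y -> tgt l = y -> Gy_fix one act y (Ty y) l.
Proof.
move=> Gl sl tl; split => //; split => // b Tb.
have [t [Tt tE]] := extension Tb.
have bE : b * e y = b by apply/inSE; case: Tb.
apply: (proj1 (@Fix_ext l t b _ _) (Gl t Tt)); by rewrite ?sl ?tl tE bE.
Qed.

Lemma Gy_to_GT y l : Gy_fix one act y (Ty y) l -> GT l.
Proof.
case=> sl [tl Fl] t [_ Tt].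
have ee : t * e y * e y = t * e y by rewrite -mulrA idem.
have Tb : Ty y (t * e y).
  split; first exact: inS_mulr.
  move=> k [[Hk _] [sk tk]]; apply: (proj1 (@Fix_ext k t (t * e y) _ _) (Tt k Hk)); by rewrite ?sk ?tk ee.
apply: (proj2 (@Fix_ext l t (t * e y) _ _) (Fl _ Tb)); by rewrite ?sl ?tl ee.
Qed.

Lemma GT_compl f g : H f -> full f -> src f = tgt g -> GT g -> GT (comp f g).
Proof.
move=> Hf ff E Gg t Tt; apply: Fix_compl => //; last exact: Gg.
by case: Tt => _; apply.
Qed.

Lemma GT_compr f g : H f -> full f -> src g = tgt f -> GT g -> GT (comp g f).
Proof.
move=> Hf ff E Gg t Tt; apply: Fix_compr => //; last exact: Gg.
by case: Tt => _; apply.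
Qed.

Lemma GT_compl_inv f g : H f -> full f -> src f = tgt g -> GT (comp f g) -> GT g.
Proof.
move=> Hf ff E Gg; rewrite -(cancel_l E); apply: GT_compl => //.
- exact: H_inv.
- exact: full_inv.
- by rewrite src_ginv tgt_comp.
Qed.

Lemma GT_compr_inv f g : H f -> full f -> src g = tgt f -> GT (comp g f) -> GT g.
Proof.
move=> Hf ff E Gg; rewrite -(cancel_r E); apply: GT_compr => //.
- exact: H_inv.
- exact: full_inv.
- by rewrite tgt_ginv src_comp.
Qed.

Lemma cross (nz : forall g, one g != 0) g : GT g -> hrel H (src g) (tgt g).
Proof.
move=> Gg; apply: NNPP => nh.
set z := src g.
pose c := fun v => if excluded_middle_informative (hrel H z v) then e v else 0.
have Sc : forall v, inS one (idm v) (c v).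
  move=> v; rewrite /c; destruct (excluded_middle_informative (hrel H z v)); simpl; [exact: inS_self | exact: inS0].
pose t := \sum_v c v.
have tc : forall v, t * e v = c v by move=> v; exact: sum_proj.
have cE : forall v, hrel H z v -> c v = e v.
  by move=> v hz; rewrite /c; destruct (excluded_middle_informative (hrel H z v)).
have cN : forall v, ~ hrel H z v -> c v = 0.
  by move=> v hz; rewrite /c; destruct (excluded_middle_informative (hrel H z v)).
have Tt : T t.
  split => // h Hh.
  case: (classic (hrel H z (src h))) => [hs|nhs].
    have ht : hrel H z (tgt h) by apply: hrel_trans hs _; exists h.
    apply/(Fix_ext (a' := 1)); rewrite ?mul1r ?tc ?cE //.
    by rewrite /Fix !mul1r act_one.
  have nht : ~ hrel H z (tgt h).
    move=> ht; apply: nhs; apply: hrel_trans ht _; apply: hrel_sym; by exists h.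
  apply/(Fix_ext (a' := 0)); rewrite ?mul0r ?tc ?cN //.
  by rewrite /Fix !mul0r act0.
have := Gg t Tt; rewrite /Fix.
rewrite (mul_one_src g t) (mul_one_tgt g t) tc cE; last exact: hrel_refl.
rewrite tc cN // mul0r.
have -> : e (src g) * one (ginv g) = one (ginv g).
  by rewrite -(tgt_ginv g) -cent ?one_sub.
rewrite act_one // => E; by move: (nz g); rewrite E eqxx.
Qed.


Lemma main_sec (nz : forall g, one g != 0) (x0 : Ob G) (rep : Ob G -> Prop)
  (reps : forall y, exists z, rep z /\ hrel H z y /\
                       forall z', rep z' -> hrel H z' y -> z' = z) :
  (wide_subgroupoid GT <->
     (forall y, rep y -> isotropy_subgroup y (Gy_fix one act y (Ty y)))) /\
  ((forall g, GT g <-> H g) <->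
     (forall y, rep y -> forall l,
        Gy_fix one act y (Ty y) l <-> isotropy (component H y) y l)).
Proof.
split.
  split.
    case=> [[_ [Cc Ci]] Wd] y ry; split; [|split; [|split]].
    - by move=> l [sl [tl _]].
    - split; first exact: src_idm. split; first exact: tgt_idm.
      move=> b _; exact: Fix_id.
    - move=> l m Gl Gm; have [sl [tl _]] := Gl; have [sm [tm _]] := Gm.
      have E : src l = tgt m by rewrite sl tm.
      apply: (GT_to_Gy (Cc _ _ (Gy_to_GT Gl) (Gy_to_GT Gm) E)).
        by rewrite (src_comp E).
      by rewrite (tgt_comp E).
    - move=> l [sl [tl Fl]]; split; first by rewrite (src_ginv l).
      split; first by rewrite (tgt_ginv l).
      move=> b Tb; exact: (Fix_inv (Fl b Tb)).
  move=> Hrep; split; [split; [|split] | ].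
  - by exists (idm x0) => t _; exact: Fix_id.
  - move=> g h Gg Gh E.
    have hh := cross nz Gh; have hg := cross nz Gg; rewrite E in hg.
    have [y [ry [hyu _]]] := reps (src h).
    have hyv := hrel_trans hyu hh; have hyw := hrel_trans hyv hg.
    have [fu [Hfu [ffu [sfu tfu]]]] := exists_full hyu.
    have [fv [Hfv [ffv [sfv tfv]]]] := exists_full hyv.
    have [fw [Hfw [ffw [sfw tfw]]]] := exists_full hyw.
    have a1 : tgt fw = tgt g by [].
    have a2 : src g = tgt fv by rewrite E.
    have a3 : tgt h = tgt fv by [].
    have a4 : src h = tgt fu by [].
    have c1 : src (ginv fv) = tgt (comp h fu) by rewrite (src_ginv fv) (tgt_comp a4).
    have G1 : GT (comp (ginv fv) (comp h fu)).
      apply: GT_compl; [exact: H_inv | exact: full_inv | exact: c1 |].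
      exact: GT_compr.
    have c2 : src (ginv fw) = tgt (comp g fv) by rewrite (src_ginv fw) (tgt_comp a2).
    have G2 : GT (comp (ginv fw) (comp g fv)).
      apply: GT_compl; [exact: H_inv | exact: full_inv | exact: c2 |].
      exact: GT_compr.
    have Y1 : Gy_fix one act y (Ty y) (comp (ginv fv) (comp h fu)).
      apply: GT_to_Gy => //; first by rewrite (src_comp c1) (src_comp a4).
      by rewrite (tgt_comp c1) (tgt_ginv fv).
    have Y2 : Gy_fix one act y (Ty y) (comp (ginv fw) (comp g fv)).
      apply: GT_to_Gy => //; first by rewrite (src_comp c2) (src_comp a2).
      by rewrite (tgt_comp c2) (tgt_ginv fw).
    have [_ [_ [Hc _]]] := Hrep y ry.
    have G3 := Gy_to_GT (Hc _ _ Y2 Y1).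
    rewrite (comp_eq a1 a2 a3 a4) in G3.
    have a5 : src g = tgt h by [].
    have c3 : src (ginv fw) = tgt (comp (comp g h) fu).
      by rewrite (src_ginv fw) (tgt_comp (h := fu)) ?(tgt_comp a5) // (src_comp a5).
    have G4 := GT_compl_inv (H_inv Hfw) (full_inv ffw) c3 G3.
    apply: (GT_compr_inv Hfu ffu _ G4).
    by rewrite (src_comp a5).
  - move=> g Gg t Tt; exact: (Fix_inv (Gg t Tt)).
  - move=> x t _; exact: Fix_id.
split.
  move=> Heq y ry l; split.
    move=> Gl; have [sl [tl _]] := Gl; apply: iso_of => //; apply/Heq.
    exact: Gy_to_GT Gl.
  move=> [[Hl _] [sl tl]]; apply: GT_to_Gy => //; exact/Heq.
move=> Hiso g; split; last first.
  by move=> Hg t [_ Tt]; exact: Tt.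
move=> Gg; have hh := cross nz Gg.
have [y [ry [hyu _]]] := reps (src g).
have hyw := hrel_trans hyu hh.
have [fu [Hfu [ffu [sfu tfu]]]] := exists_full hyu.
have [fw [Hfw [ffw [sfw tfw]]]] := exists_full hyw.
have a4 : src g = tgt fu by [].
have c1 : src (ginv fw) = tgt (comp g fu) by rewrite (src_ginv fw) (tgt_comp a4).
have Gk : GT (comp (ginv fw) (comp g fu)).
  apply: GT_compl; [exact: H_inv | exact: full_inv | exact: c1 |].
  exact: GT_compr.
have Yk : Gy_fix one act y (Ty y) (comp (ginv fw) (comp g fu)).
  apply: GT_to_Gy => //; first by rewrite (src_comp c1) (src_comp a4).
  by rewrite (tgt_comp c1) (tgt_ginv fw).
have [[Hk _] [sk tk]] := proj1 (Hiso y ry _) Yk.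
rewrite (conj_eq a4 tfw).
have d1 : src (comp (ginv fw) (comp g fu)) = tgt (ginv fu) by rewrite sk (tgt_ginv fu).
apply: H_comp => //; last by rewrite (tgt_comp d1) tk.
apply: H_comp => //; exact: H_inv.
Qed.

End Main.

Theorem proposition4p3 (G : groupoid) (R : pzRingType)
    (one : Mor G -> R) (act : Mor G -> R -> R)
    (H : Mor G -> Prop) (rep : Ob G -> Prop) :
  connected G ->
  direct_sum_decomp one ->
  unital_partial_action one act ->
  group_type_on one (fun _ => True) (fun _ => True) ->
  (forall g, one g != 0) ->
  wSub one H ->
  (* rep = {y_1, ..., y_r}: exactly one chosen object in each component of H *)
  (forall y, exists z, rep z /\ hrel H z y /\
                       forall z', rep z' -> hrel H z' y -> z' = z) ->
  let T := fixed_ring one act H (fun _ => True) in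
  let Ty := fun y => fixed_ring one act (isotropy (component H y) y)
                                (inS one (idm y)) in
  (wide_subgroupoid (G_fix one act T) <->
     (forall y, rep y -> isotropy_subgroup y (Gy_fix one act y (Ty y)))) /\
  ((forall g, G_fix one act T g <-> H g) <->
     (forall y, rep y -> forall l,
        Gy_fix one act y (Ty y) l <-> isotropy (component H y) y l)).
Proof.
move=> conn dsd upa gtG nz wsH reps T Ty.
have [x0 _] := gtG.
exact: (main_sec upa dsd wsH nz x0 reps).
Qed.
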